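(* Let $n\ge0$ and run the Tiden–Arnborg algorithm on $\sigma(n)$. At no stage does the current system contain an equation of the form $y_{2^j}=^?T\times x_k$ with $j\ge 0$ (i.e., no lateral edge leaves a node $y_{2^j}$).
   Context: Variables are $T$, $x_s$, $y_s$ with $s$ a string over $\{1,2\}$ ($x=x_\varepsilon$, $y=y_\varepsilon$); $2^j$ denotes the string of $j$ twos. For $n\ge0$, $\sigma(n)$ is the system consisting of, for all $0\le i\le n$: $x_{1^i}=^?x_{1^{i+1}}+x_{1^i2}$, $y_{2^i}=^?y_{2^i1}+y_{2^{i+1}}$, $y_{2^i1}=^?T\times x_{1^i2}$, $x=^?T\times y$, $x_{1^{i+1}}=^?x_{1^{i+2}}+x_{1^{i+1}2}$. The algorithm (for the theory $x\times(y+z)=x\times y+x\times z$) repeatedly applies sum transformations to the current system: whenever a variable $U_i$ (with $U\in\{x,y\}$) has both equations $U_i=^?T\times W_j$ and $U_i=^?U_{i1}+U_{i2}$ (such a variable is called a peak), the sum equation $U_i=^?U_{i1}+U_{i2}$ is replaced by $W_j=^?W_{j1}+W_{j2}$, $U_{i1}=^?T\times W_{j1}$, $U_{i2}=^?T\times W_{j2}$ (keeping $U_i=^?T\times W_j$), where the new variables $W_{j1},W_{j2}$ are identified with the existing children of $W_j$ if $W_j$ already has a sum equation $W_j=^?W_{j1}+W_{j2}$. A lateral edge from $u$ to $v$ means the equation $u=^?T\times v$ is present. *)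

(* Defs.v *)
From mathcomp Require Import all_boot.
Set Implicit Arguments. Unset Strict Implicit. Unset Printing Implicit Defensive.

(* Variables x_s, y_s with s a string over {1,2}; strings are seq nat
   (only the digits 1 and 2 ever occur). x = x_[::], y = y_[::]. *)
Inductive letter := LX | LY.

Record var := Var { vletter : letter; vstr : seq nat }.

Definition xv (s : seq nat) : var := Var LX s.
Definition yv (s : seq nat) : var := Var LY s.

Definition child1 (u : var) : var := Var (vletter u) (rcons (vstr u) 1).
Definition child2 (u : var) : var := Var (vletter u) (rcons (vstr u) 2).

(* Equations:  Sum u v w   is   u =? v + w ;   Prod u v   is   u =? T x v
   (T the fixed constant). *)
Inductive equation :=
| Sum of var & var & var
| Prod of var & var.

Definition system := equation -> Prop.

Definition sigma (n : nat) : system := fun e =>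
  exists2 i, i <= n &
    (e = Sum (xv (nseq i 1)) (xv (nseq i.+1 1)) (xv (rcons (nseq i 1) 2)) \/
        e = Sum (yv (nseq i 2)) (yv (rcons (nseq i 2) 1)) (yv (nseq i.+1 2)) \/
        e = Prod (yv (rcons (nseq i 2) 1)) (xv (rcons (nseq i 1) 2)) \/
        e = Prod (xv [::]) (yv [::]) \/
        e = Sum (xv (nseq i.+1 1)) (xv (nseq i.+2 1)) (xv (rcons (nseq i.+1 1) 2))).

Definition sum_step (S S' : system) : Prop :=
  exists u u1 u2 w a b,
    [/\ S (Prod u w), S (Sum u u1 u2),
        (S (Sum w a b) \/
         ((forall c d, ~ S (Sum w c d)) /\ a = child1 w /\ b = child2 w)) &
        S' = (fun e => (S e /\ e <> Sum u u1 u2) \/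
                       e = Sum w a b \/ e = Prod u1 a \/ e = Prod u2 b)].

Inductive reachable (S0 : system) : system -> Prop :=
| reach_refl : reachable S0 S0
| reach_step S S' : reachable S0 S -> sum_step S S' -> reachable S0 S'.

(* Main.v *)
Require Import Defs.
From mathcomp Require Import all_boot.

Lemma nseq_rconsc (c j : nat) : nseq j.+1 c = rcons (nseq j c) c.
Proof. by elim: j => [|j IH] //=; rewrite -IH. Qed.
Lemma nseq_rcons2 (j : nat) : nseq j.+1 2 = rcons (nseq j 2) 2.
Proof. exact: nseq_rconsc. Qed.

Lemma rcons_not_nseq (s : seq nat) (c j : nat) :
  (forall j', s <> nseq j' 2) -> rcons s c <> nseq j 2.
Proof.
move=> Hs; case: j => [|j]; first by case: s {Hs}.
rewrite nseq_rcons2 => /rcons_inj [] /Hs //.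
Qed.

Definition Inv (S : system) : Prop :=
  (forall u u1 u2, S (Sum u u1 u2) -> u1 = child1 u /\ u2 = child2 u) /\
  (forall u w, S (Prod u w) -> vletter u <> vletter w /\
     (vletter u = LY -> forall j, vstr u <> nseq j 2)).

Lemma inv_init n : Inv (sigma n).
Proof.
split.
- move=> u u1 u2 [i _ [|[|[|[|]]]]] // [-> -> ->];
    by rewrite /child1 /child2 /= -?nseq_rconsc.
- move=> u w [i _ [|[|[|[|]]]]] // [-> ->]; split => //= _ j.
  case: j => [|j]; first by case: (nseq i 2).
  by rewrite nseq_rcons2 => /rcons_inj [].
Qed.

Lemma inv_step S S' : Inv S -> sum_step S S' -> Inv S'.
Proof.
move=> [H1 H2] [u [u1 [u2 [w [a [b [Hp Hs Hw ->]]]]]]].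
have [e1 e2] := H1 _ _ _ Hs; subst u1 u2.
have [ea eb] : a = child1 w /\ b = child2 w.
  by case: Hw => [/H1|[_ [-> ->]]].
subst a b.
have [Hl HY] := H2 _ _ Hp.
split.
- move=> v v1 v2 [[/H1 //]|[|[|]]] //; by case=> -> -> ->.
- move=> v z [[/H2 //]|[|[|]]] //; case=> -> -> /=; split => // HL j;
  apply: rcons_not_nseq => j'; exact: HY HL j'.
Qed.

Theorem lemma2 (n : nat) (S : system) :
  reachable (sigma n) S ->
  forall (j : nat) (k : seq nat), ~ S (Prod (yv (nseq j 2)) (xv k)).
Proof.
move=> R.
have I : Inv S by elim: R => [|S0 S1 _ IH st]; [exact: inv_init | exact: inv_step st].
move=> j k /(I.2) [_ H]; exact: (H erefl j).
Qed.
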